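(* For the $3\times3$ absorbing game \[ A=\begin{bmatrix}1^* & 1^* & 2^*\\ 1^* & 2^* & 0\\ 2^* & 0 & 1^*\end{bmatrix}, \] let $(x_\lambda)_{\lambda\in(0,1]}$ be any family of optimal stationary strategies of Player 1 in the $\lambda$-discounted games. Then every accumulation point $x=(x^1,x^2,x^3)$ of $x_\lambda$ as $\lambda\to0$ satisfies $x^i>0$ for $i=1,2,3$. Moreover the limit value satisfies $v\ge 4/3$. *)

(* Defs.v *)
From HB Require Import structures.
From mathcomp Require Import all_boot all_order all_algebra.
From mathcomp Require Import all_classical all_reals all_analysis.
Set Implicit Arguments. Unset Strict Implicit. Unset Printing Implicit Defensive.
Import Order.TTheory GRing.Theory Num.Theory.
Local Open Scope ring_scope.

Section AbsorbingGame.
Variable R : realType.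

Definition gpay (i j : 'I_3) : R :=
  match nat_of_ord i, nat_of_ord j with
  | 0, 0 => 1 | 0, 1 => 1 | 0, _ => 2
  | 1, 0 => 1 | 1, 1 => 2 | 1, _ => 0
  | _, 0 => 2 | _, 1 => 0 | _, _ => 1
  end.

(* Absorption indicator: every entry is absorbing (starred) except the two
   zero entries at positions (2,3) and (3,2) (1-indexed). *)
Definition pabs (i j : 'I_3) : R :=
  if ((nat_of_ord i == 1%N) && (nat_of_ord j == 2%N)) ||
     ((nat_of_ord i == 2%N) && (nat_of_ord j == 1%N)) then 0 else 1.

(* Mixed actions = stationary strategies (the game has a single non-absorbing state). *)
Definition mixed (x : 'I_3 -> R) : Prop :=
  (forall i, 0 <= x i) /\ \sum_(i < 3) x i = 1.

Definition gnon (x y : 'I_3 -> R) : R :=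
  \sum_(i < 3) \sum_(j < 3) x i * y j * (1 - pabs i j) * gpay i j.
Definition gstar (x y : 'I_3 -> R) : R :=
  \sum_(i < 3) \sum_(j < 3) x i * y j * pabs i j * gpay i j.
Definition pstar (x y : 'I_3 -> R) : R :=
  \sum_(i < 3) \sum_(j < 3) x i * y j * pabs i j.

(* Normalized lambda-discounted payoff, sum_t lam (1-lam)^(t-1) g_t, when the
   players use stationary strategies x, y (payoff of the absorbing entry is
   received at the absorption stage and at all later stages). *)
Definition gamma (lam : R) (x y : 'I_3 -> R) : R :=
  (lam * gnon x y + gstar x y) / (lam * (1 - pstar x y) + pstar x y).

Definition is_disc_value (lam v : R) : Prop :=
  (exists x, mixed x /\ forall y, mixed y -> v <= gamma lam x y) /\
  (exists y, mixed y /\ forall x, mixed x -> gamma lam x y <= v).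

Definition optimal1 (lam : R) (x : 'I_3 -> R) : Prop :=
  mixed x /\ exists v, is_disc_value lam v /\
                       forall y, mixed y -> v <= gamma lam x y.

Definition accum_point (xs : R -> 'I_3 -> R) (x : 'I_3 -> R) : Prop :=
  forall e d : R, 0 < e -> 0 < d ->
    exists lam, 0 < lam /\ lam < d /\ lam <= 1 /\
      forall i, `|xs lam i - x i| < e.

End AbsorbingGame.

(* Main.v *)
Require Import Defs.
From HB Require Import structures.
From mathcomp Require Import all_boot all_order all_algebra.
From mathcomp Require Import all_classical all_reals all_analysis.
From mathcomp Require Import ring lra.
Import Order.TTheory GRing.Theory Num.Theory.
Import numFieldNormedType.Exports.
Local Open Scope classical_set_scope.
Local Open Scope ring_scope.
Set Implicit Arguments. Unset Strict Implicit.

Section S.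
Variable R : realType.
Notation i0 := (@Ordinal 3 0 isT).
Notation i1 := (@Ordinal 3 1 isT).
Notation i2 := (@Ordinal 3 2 isT).

Lemma sum3 (f : 'I_3 -> R) : \sum_(i < 3) f i = f i0 + f i1 + f i2.
Proof.
rewrite !big_ord_recr big_ord0 /= add0r.
by congr (_ + _ + _); congr f; apply: val_inj.
Qed.

Lemma gnonE (x y : 'I_3 -> R) : gnon x y = 0.
Proof. rewrite /gnon !sum3 /pabs /gpay /=; ring. Qed.

Lemma gstarE (x y : 'I_3 -> R) : gstar x y =
  x i0 * y i0 + x i0 * y i1 + 2 * x i0 * y i2 + x i1 * y i0 + 2 * x i1 * y i1
  + 2 * x i2 * y i0 + x i2 * y i2.
Proof. rewrite /gstar !sum3 /pabs /gpay /=; ring. Qed.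

Lemma pstarE (x y : 'I_3 -> R) : pstar x y =
  (x i0 + x i1 + x i2) * (y i0 + y i1 + y i2) - x i1 * y i2 - x i2 * y i1.
Proof. rewrite /pstar !sum3 /pabs /=; ring. Qed.

Lemma mixedE (x : 'I_3 -> R) : mixed x ->
  [/\ 0 <= x i0, 0 <= x i1, 0 <= x i2 & x i0 + x i1 + x i2 = 1].
Proof. by move=> [h s]; rewrite sum3 in s; split. Qed.

Definition ej (k : nat) : 'I_3 -> R := fun i => if nat_of_ord i == k then 1 else 0.

Lemma mixed_ej k : (k < 3)%N -> mixed (ej k).
Proof.
move=> hk; split.
  by move=> i; rewrite /ej; case: ifP.
by rewrite sum3 /ej /=; case: k hk => [|[|[|]]] //= _; lra.
Qed.

Lemma mixed_c : mixed (fun _ => 1/3 : R).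
Proof. by split => [i|]; rewrite ?sum3; lra. Qed.

Lemma Dpos (lam : R) (x y : 'I_3 -> R) : 0 < lam -> lam <= 1 -> mixed x -> mixed y ->
  0 < lam * (1 - pstar x y) + pstar x y.
Proof.
move=> l0 l1 /mixedE[a b c s] /mixedE[p q r t]; rewrite pstarE s t.
have h1 : 0 <= x i1 * y i2 + x i2 * y i1 by nra.
have h2 : x i1 * y i2 + x i2 * y i1 <= 1 by nra.
nra.
Qed.

Lemma gstar_ge0 (x y : 'I_3 -> R) : mixed x -> mixed y -> 0 <= gstar x y.
Proof. move=> /mixedE[a b c s] /mixedE[p q r t]; rewrite gstarE; nra. Qed.

Lemma gamma_mono (l1 l2 : R) (x y : 'I_3 -> R) : 0 < l1 -> l1 <= l2 -> l2 <= 1 ->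
  mixed x -> mixed y -> gamma l2 x y <= gamma l1 x y.
Proof.
move=> l10 l12 l21 mx my.
have D1 := Dpos l10 (le_trans l12 l21) mx my.
have D2 := Dpos (lt_le_trans l10 l12) l21 mx my.
have N0 := gstar_ge0 mx my.
rewrite /gamma gnonE !mulr0 !add0r ler_pdivlMr // mulrAC ler_pdivrMr //.
apply: ler_wpM2l => //.
have : pstar x y <= 1.
  move: mx my => /mixedE[a b c s] /mixedE[p q r t]; rewrite pstarE s t; nra.
nra.
Qed.

Lemma v_mono (l1 l2 w1 w2 : R) : 0 < l1 -> l1 <= l2 -> l2 <= 1 ->
  is_disc_value l1 w1 -> is_disc_value l2 w2 -> w2 <= w1.
Proof.
move=> l10 l12 l21 [_ [y1 [my1 hy1]]] [[x2 [mx2 hx2]] _].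
apply: le_trans (hx2 _ my1) _.
apply: le_trans (gamma_mono l10 l12 l21 mx2 my1) _.
exact: hy1.
Qed.

Lemma v_ub (lam w : R) : 0 < lam -> lam <= 1 -> is_disc_value lam w -> w <= 2.
Proof.
move=> l0 l1 [[x [mx hx]] _].
apply: le_trans (hx _ (mixed_ej (isT : (0 < 3)%N))) _.
move: mx => /mixedE[a b c s].
rewrite /gamma gnonE pstarE gstarE /ej /= s.
have -> : lam * (1 - (1 * (1 + 0 + 0) - x i1 * 0 - x i2 * 0)) +
   (1 * (1 + 0 + 0) - x i1 * 0 - x i2 * 0) = 1 by ring.
rewrite divr1; lra.
Qed.

Lemma v_lb (lam w : R) : 0 < lam -> lam <= 1/4 -> is_disc_value lam w -> 4/3 <= w.
Proof.
move=> l0 l1 [_ [y [my hy]]].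
have l1' : lam <= 1 by lra.
apply: le_trans (hy _ mixed_c).
have D := Dpos l0 l1' mixed_c my.
rewrite /gamma gnonE mulr0 add0r ler_pdivlMr //.
move: my => /mixedE[p q r t]; rewrite gstarE pstarE t.
have : 0 <= (1/4 - lam) * (y i1 + y i2) by apply: mulr_ge0; lra.
nra.
Qed.

Lemma col_ineq (lam w : R) (x : 'I_3 -> R) k : 0 < lam -> lam <= 1 -> (k < 3)%N ->
  mixed x -> 4/3 <= w -> w <= gamma lam x (ej k) ->
  4/3 * (lam * (1 - pstar x (ej k)) + pstar x (ej k)) <= gstar x (ej k).
Proof.
move=> l0 l1 hk mx hw hg.
have D := Dpos l0 l1 mx (mixed_ej hk).
have := le_trans hw hg; rewrite /gamma gnonE mulr0 add0r ler_pdivlMr //.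
Qed.

Lemma opt_bounds (lam : R) (x : 'I_3 -> R) : 0 < lam -> lam <= 1/4 -> optimal1 lam x ->
  [/\ 1/6 <= x i0, 1/12 <= x i1 & 1/3 <= x i2].
Proof.
move=> l0 l1 [mx [w [hw hxw]]].
have l1' : lam <= 1 by lra.
have w43 := v_lb l0 l1 hw.
have c0 := col_ineq l0 l1' (isT : (0 < 3)%N) mx w43 (hxw _ (@mixed_ej 0%N isT)).
have c1 := col_ineq l0 l1' (isT : (1 < 3)%N) mx w43 (hxw _ (@mixed_ej 1%N isT)).
have c2 := col_ineq l0 l1' (isT : (2 < 3)%N) mx w43 (hxw _ (@mixed_ej 2%N isT)).
move: c0 c1 c2; rewrite !gstarE !pstarE /ej /=.
move: mx => /mixedE[a b c s].
rewrite s => c0 c1 c2.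
have h1 : 0 <= lam * x i1 by nra.
have h2 : 0 <= lam * x i2 by nra.
split; nra.
Qed.

Lemma ord3_cases (i : 'I_3) : [\/ i = i0, i = i1 | i = i2].
Proof.
case: i => [[|[|[|k]]] hi] //.
- by apply: Or31; apply: val_inj.
- by apply: Or32; apply: val_inj.
- by apply: Or33; apply: val_inj.
Qed.

End S.

Theorem mainTheorem4 (R : realType) (xs : R -> 'I_3 -> R) (v : R -> R) :
  (forall lam : R, 0 < lam -> lam <= 1 -> is_disc_value lam (v lam)) ->
  (forall lam : R, 0 < lam -> lam <= 1 -> optimal1 lam (xs lam)) ->
  (forall x : 'I_3 -> R, accum_point xs x -> forall i, 0 < x i) /\
  (exists l : R, v x @[x --> 0^'+] --> l /\ 4 / 3 <= l).
Proof.
move=> hv hx; split.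
  move=> x acc i.
  have [lam [l0 [ld [l1 he]]]] := acc (1/24) (1/4) ltac:(lra) ltac:(lra).
  have [b0 b1 b2] := opt_bounds l0 (ltW ld) (hx lam l0 l1).
  have := he i; rewrite ltr_distlC => /andP[h _].
  case: (ord3_cases i) h => -> h; lra.
set S := v @` [set` Interval (BRight (0:R)) (BLeft 1)].
have ubS : has_ubound S.
  exists 2 => y [t]; rewrite /= in_itv /= => /andP[t0 t1] <-.
  exact: v_ub t0 (ltW t1) (hv _ t0 (ltW t1)).
exists (sup S); split.
  apply: nonincreasing_at_right_cvgr => //; first by rewrite bnd_simp.
  move=> a b; rewrite !in_itv /= => /andP[a0 a1] /andP[b0 b1] ab.
  exact: v_mono a0 ab (ltW b1) (hv _ a0 (ltW a1)) (hv _ b0 (ltW b1)).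
have h8 : (0:R) < 1/8 by lra.
have h81 : (1/8:R) <= 1 by lra.
apply: le_trans (v_lb h8 _ (hv _ h8 h81)) _; first lra.
apply: ub_le_sup => //; exists (1/8) => //=; rewrite in_itv /=; apply/andP; split; lra.
Qed.
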